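(* Let $G$ be a finite abelian group, $H_1$ a subgroup of $G$, and $A_1$ a proper subset of $H_1$ such that the elements $x-y$ ($x,y\in A_1$) generate $H_1$. Let $S$ be the set of all subgroups $J\le G$ such that $A_1$ is a union of cosets of $J$. Choose any set (possibly empty) of cosets of $H_1$ different from $H_1$ itself, and partition each chosen coset into cosets of subgroups belonging to $S$. Let $\mathcal{A}$ consist of $A_1$ together with all sets in these partitions. Then $\mathcal{A}$ is a bimodal collection of pairwise disjoint subsets of $G$ in which $A_1$ is the unique member whose size is smaller than the order of its internal difference group.
   Context: $G$ is written additively. The internal difference group of a subset $T\subseteq G$ is the subgroup generated by all $x-y$ with $x,y\in T$. A collection $\{A_1,\dots,A_m\}$ of pairwise disjoint subsets of $G$ is bimodal if for every $i$ and every $\delta\in G\setminus\{0\}$, the number $N_i(\delta)$ of pairs $(a,b)$ with $a\in A_i$, $b\in A_j$ for some $j\neq i$, and $a-b=\delta$, satisfies $N_i(\delta)\in\{0,|A_i|\}$. *)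

(* Defs.v *)
From HB Require Import structures.
From mathcomp Require Import all_boot all_order all_algebra.
Set Implicit Arguments. Unset Strict Implicit. Unset Printing Implicit Defensive.
Import GRing.Theory.
Local Open Scope ring_scope.

Definition is_subgrp (G : finZmodType) (H : {set G}) : bool :=
  (0 \in H) && [forall x in H, forall y in H, x - y \in H].

Definition diffs (G : finZmodType) (T : {set G}) : {set G} :=
  [set x - y | x in T, y in T].

Definition diffgrp (G : finZmodType) (T : {set G}) : {set G} :=
  \bigcap_(K : {set G} | is_subgrp K && (diffs T \subset K)) K.

Definition coset_of (G : finZmodType) (J : {set G}) (x : G) : {set G} :=
  [set x + j | j in J].

Definition union_of_cosets (G : finZmodType) (J A : {set G}) : Prop :=
  exists X : {set G}, A = \bigcup_(x in X) coset_of J x.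

Definition Ncount (G : finZmodType) (coll : {set {set G}}) (A : {set G})
  (delta : G) : nat :=
  #|[set ab : G * G | [&& ab.1 \in A,
        [exists B in coll, (B != A) && (ab.2 \in B)] &
        ab.1 - ab.2 == delta]]|.

Definition bimodal (G : finZmodType) (coll : {set {set G}}) : Prop :=
  forall A, A \in coll -> forall delta : G, delta != 0 ->
    Ncount coll A delta = 0%N \/ Ncount coll A delta = #|A|.

(* Main.v *)
Require Import Defs.
From mathcomp Require Import all_boot all_order all_algebra.
Import GRing.Theory.
Set Implicit Arguments. Unset Strict Implicit.
Local Open Scope ring_scope.

Lemma sg0 (G : finZmodType) (H : {set G}) : is_subgrp H -> 0 \in H.
Proof. by case/andP. Qed.

Lemma sgB (G : finZmodType) (H : {set G}) x y :
  is_subgrp H -> x \in H -> y \in H -> x - y \in H.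
Proof. by case/andP=> _ /forall_inP h hx hy; move/forall_inP: (h x hx) => /(_ y hy). Qed.

Lemma sgN (G : finZmodType) (H : {set G}) x :
  is_subgrp H -> x \in H -> - x \in H.
Proof. by move=> hH hx; rewrite -sub0r sgB // sg0. Qed.

Lemma sgD (G : finZmodType) (H : {set G}) x y :
  is_subgrp H -> x \in H -> y \in H -> x + y \in H.
Proof. by move=> hH hx hy; rewrite -[y]opprK sgB // sgN. Qed.

Lemma subBB (G : zmodType) (x y z : G) : x - z - (y - z) = x - y.
Proof. by rewrite opprB addrA subrK. Qed.

Lemma mem_coset (G : finZmodType) (J : {set G}) x y :
  (y \in coset_of J x) = (y - x \in J).
Proof.
apply/imsetP/idP => [[j hj ->]|h]; first by rewrite addrC addKr.
by exists (y - x) => //; rewrite addrC subrK.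
Qed.

Lemma coset_eq (G : finZmodType) (H : {set G}) x y :
  is_subgrp H -> y \in coset_of H x -> coset_of H x = coset_of H y.
Proof.
rewrite mem_coset => hH hy; apply/setP => z; rewrite !mem_coset.
apply/idP/idP => h.
  by have := sgB hH h hy; rewrite subBB.
by have := sgD hH h hy; rewrite addrA subrK.
Qed.

Lemma coset_self (G : finZmodType) (H : {set G}) y :
  is_subgrp H -> y \in H -> coset_of H y = H.
Proof.
move=> hH hy; rewrite -(coset_eq (x := 0) hH); last by rewrite mem_coset subr0.
by apply/setP => z; rewrite mem_coset subr0.
Qed.

Lemma coset_trans (G : finZmodType) (H : {set G}) x y h :
  y \in coset_of H x -> is_subgrp H -> h \in H -> y + h \in coset_of H x.
Proof. by rewrite !mem_coset addrAC => hy hH hh; rewrite sgD. Qed.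

Lemma coset_diff (G : finZmodType) (H : {set G}) x a b :
  is_subgrp H -> a \in coset_of H x -> b \in coset_of H x -> b - a \in H.
Proof. by rewrite !mem_coset => hH ha hb; have := sgB hH hb ha; rewrite subBB. Qed.

Lemma card_coset (G : finZmodType) (J : {set G}) x : #|coset_of J x| = #|J|.
Proof. by rewrite /coset_of card_imset //; exact: addrI. Qed.

Lemma diffgrp_coset (G : finZmodType) (J : {set G}) x :
  is_subgrp J -> diffgrp (coset_of J x) = J.
Proof.
move=> hJ; apply/eqP; rewrite eqEsubset; apply/andP; split.
  apply: bigcap_inf; rewrite hJ /=; apply/subsetP => d /imset2P [u v hu hv ->].
  by have := coset_diff hJ hv hu.
apply/bigcapsP => K /andP[hK hd]; apply/subsetP => j hj.
have <- : (x + j) - x = j by rewrite [x + j]addrC addrK.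
apply: (subsetP hd); apply: imset2_f; first by rewrite mem_coset [x + j]addrC addrK.
by rewrite mem_coset subrr sg0.
Qed.

Lemma uc_inv (G : finZmodType) (J A : {set G}) y j :
  union_of_cosets J A -> is_subgrp J -> y \in A -> j \in J -> y + j \in A.
Proof.
move=> [X ->] hJ /bigcupP [x hx hy] hj; apply/bigcupP; exists x => //.
exact: coset_trans.
Qed.

Lemma card_all_or_none (G : finType) (A : {set G}) (Q : pred G) :
  (forall a a', a \in A -> a' \in A -> Q a -> Q a') ->
  #|[set a in A | Q a]| = 0%N \/ #|[set a in A | Q a]| = #|A|.
Proof.
move=> h; case: (boolP [exists a in A, Q a]).
  case/exists_inP => a0 ha0 q0; right; apply: eq_card => a.
  rewrite inE; case: (boolP (a \in A)) => //= ha; exact: h q0.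
move/exists_inPn => hn; left; apply/eqP; rewrite cards_eq0; apply/eqP/setP => a.
by rewrite !inE; case: (boolP (a \in A)) => //= ha; rewrite (negbTE (hn a ha)).
Qed.

Lemma Ncount_eq (G : finZmodType) (coll : {set {set G}}) A delta :
  Ncount coll A delta =
  #|[set a in A | [exists B in coll, (B != A) && (a - delta \in B)]]|.
Proof.
rewrite /Ncount.
have -> : [set ab : G * G | [&& ab.1 \in A,
        [exists B in coll, (B != A) && (ab.2 \in B)] &
        ab.1 - ab.2 == delta]] =
  [set (a, a - delta) | a in [set a in A | [exists B in coll, (B != A) && (a - delta \in B)]]].
  apply/setP => [[a b]]; rewrite inE /=; apply/idP/imsetP.
    case/and3P => ha hb /eqP hd; exists a; last by rewrite -hd opprB addrC subrK.
    by rewrite inE ha -hd opprB addrC subrK.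
  by case=> a' ; rewrite inE => /andP[ha hb] [-> ->]; rewrite ha hb /= opprB addrC subrK.
by apply: card_imset => a a' [].
Qed.

Unset Implicit Arguments. Set Strict Implicit.

Theorem theorem3p17 (G : finZmodType) (H1 A1 : {set G})
  (HH1 : is_subgrp H1) (HA1 : A1 \proper H1) (Hgen : diffgrp A1 = H1)
  (C : {set {set G}})
  (HC : forall c, c \in C -> (exists x : G, c = coset_of H1 x) /\ c != H1)
  (P : {set G} -> {set {set G}})
  (HP : forall c, c \in C ->
     partition (P c) c /\
     forall B, B \in P c -> exists (J : {set G}) (x : G),
        [/\ is_subgrp J, union_of_cosets J A1 & B = coset_of J x]) :
  let coll := A1 |: \bigcup_(c in C) P c in
  [/\ trivIset coll, bimodal coll,
      (#|A1| < #|diffgrp A1|)%N &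
      forall A, A \in coll -> (#|A| < #|diffgrp A|)%N -> A = A1].
Proof.
move=> coll.
have A1H : A1 \subset H1 by apply: proper_sub.
have cH c y : c \in C -> y \in c -> y \notin H1.
  move=> hc hy; apply/negP => hy1; have [[z cz] cne] := HC c hc.
  move: cne; rewrite cz (coset_eq HH1 (y := y)) -?cz // coset_self // eqxx.
  done.
have cov c : c \in C -> cover (P c) = c by move=> hc; case/and3P: (proj1 (HP c hc)) => /eqP.
have triv c : c \in C -> trivIset (P c) by move=> hc; case/and3P: (proj1 (HP c hc)) => _ ? _.
have Bsub c B : c \in C -> B \in P c -> B \subset c.
  by move=> hc hB; rewrite -(cov c hc); apply: bigcup_sup.
have mcoll B : B \in coll -> B = A1 \/ exists2 c, c \in C & B \in P c.
  by case/setU1P => [->|/bigcupP [c hc hB]]; [left | right; exists c].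
have BJ c B : c \in C -> B \in P c -> exists (J : {set G}) (x : G),
    [/\ is_subgrp J, union_of_cosets J A1, B = coset_of J x & J \subset H1].
  move=> hc hB; have [J [x [hJ hU hBe]]] := (proj2 (HP c hc)) B hB.
  exists J, x; split => //; apply/subsetP => j hj.
  have [[z cz] _] := HC c hc.
  have hx : x \in c by apply: (subsetP (Bsub c B hc hB)); rewrite hBe mem_coset subrr sg0.
  have hxj : x + j \in c.
    by apply: (subsetP (Bsub c B hc hB)); rewrite hBe mem_coset addrC addKr.
  move: hx hxj; rewrite cz => hx hxj; have := coset_diff HH1 hx hxj.
  by rewrite addrC addKr.
have uniq B B' y : B \in coll -> B' \in coll -> y \in B -> y \in B' -> B = B'.
  have aux c B0 : c \in C -> B0 \in P c -> y \in A1 -> y \in B0 -> False.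
    move=> hc hB h1 h2; have := cH c y hc (subsetP (Bsub c B0 hc hB) y h2).
    by rewrite (subsetP A1H y h1).
  move=> hB hB' h1 h2.
  case: (mcoll B hB) => [eB|[c hc hBc]]; case: (mcoll B' hB') => [eB'|[c' hc' hBc']]; subst => //.
  - by case: (aux c' B' hc' hBc' h1 h2).
  - by case: (aux c B hc hBc h2 h1).
  have yc := subsetP (Bsub c B hc hBc) y h1.
  have yc' := subsetP (Bsub c' B' hc' hBc') y h2.
  have ecc : c = c'.
    have [[z cz] _] := HC c hc; have [[z' cz'] _] := HC c' hc'.
    move: yc yc'; rewrite cz cz' => yc yc'.
    by rewrite (coset_eq HH1 yc) (coset_eq HH1 yc').
  subst c'; apply/eqP; apply/negP => /negP hne.
  have := trivIsetP (triv c hc) B B' hBc hBc' hne.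
  by move/disjointFr => /(_ y h1); rewrite h2.
have Umem y : [exists B in coll, y \in B] = (y \in A1) || [exists c in C, y \in c].
  apply/idP/idP.
    case/exists_inP => B hB hy; case: (mcoll B hB) => [<-|[c hc hBc]]; first by rewrite hy.
    by apply/orP; right; apply/exists_inP; exists c => //; apply: (subsetP (Bsub c B hc hBc)).
  case/orP => [h|/exists_inP [c hc hy]].
    by apply/exists_inP; exists A1 => //; rewrite /coll setU11.
  move: hy; rewrite -(cov c hc) => /bigcupP [B hB hy].
  apply/exists_inP; exists B => //; rewrite /coll; apply/setU1P; right.
  by apply/bigcupP; exists c.
have Qiff A y : A \in coll -> [exists B in coll, (B != A) && (y \in B)] =
    [exists B in coll, y \in B] && (y \notin A).
  move=> hA; apply/idP/idP.
    case/exists_inP => B hB /andP [hne hy]; apply/andP; split.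
      by apply/exists_inP; exists B.
    by apply/negP => hyA; move: hne; rewrite (uniq B A y hB hA hy hyA) eqxx.
  case/andP => /exists_inP [B hB hy] hyA; apply/exists_inP; exists B => //.
  by rewrite hy andbT; apply/negP => /eqP e; move: hyA; rewrite -e hy.
split.
- apply/trivIsetP => B B' hB hB' hne; rewrite -setI_eq0; apply/eqP/setP => y.
  rewrite !inE; apply/negbTE/negP => /andP [h1 h2].
  by move: hne; rewrite (uniq B B' y hB hB' h1 h2) eqxx.
- move=> A hA d hd; rewrite Ncount_eq; apply: card_all_or_none => a a' ha ha'.
  rewrite !Qiff // => /andP [hU hnA].
  have ead : a' - d = a - d + (a' - a) by rewrite [RHS]addrC addrA subrK.
  case: (mcoll A hA) => [eA|[c0 hc0 hAc]].
    subst A; move: hU; rewrite Umem (negbTE hnA) /= => /exists_inP [c hc hy].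
    have [[z cz] _] := HC c hc.
    have hy' : a' - d \in c.
      rewrite ead cz; rewrite cz in hy; apply: coset_trans => //.
      by apply: sgB => //; apply: (subsetP A1H).
    rewrite Umem; apply/andP; split.
      by apply/orP; right; apply/exists_inP; exists c.
    by apply/negP => h; move: (cH c _ hc hy'); rewrite (subsetP A1H _ h).
  have [J [x [hJ hUJ eA hJH]]] := BJ c0 A hc0 hAc.
  have haa : a' - a \in J by apply: (coset_diff (x := x) hJ); rewrite -eA.
  apply/andP; split.
    move: hU; rewrite !Umem ead => /orP [h|/exists_inP [c hc hy]].
      by rewrite (uc_inv hUJ hJ h haa).
    apply/orP; right; apply/exists_inP; exists c => //.
    have [[z cz] _] := HC c hc; rewrite cz; rewrite cz in hy.
    by apply: coset_trans => //; apply: (subsetP hJH).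
  apply/negP => h; move: hnA; rewrite eA.
  have hdJ : d \in J.
    have := coset_diff hJ (a := a' - d) (b := a') (x := x).
    rewrite opprB addrCA subrr addr0; apply; by rewrite -eA.
  have : a - d \in coset_of J x by apply: coset_trans; [rewrite -eA | | apply: sgN].
  by move=> ->.
- by rewrite Hgen; apply: proper_card.
- move=> A hA; case: (mcoll A hA) => [//|[c hc hAc]].
  have [J [x [hJ _ eA _]]] := BJ c A hc hAc.
  by rewrite eA diffgrp_coset // card_coset ltnn.
Qed.
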